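(* Let $\mathcal{X}$, $f_i$, the breakpoints and the piecewise linear functions $\overline{f}_i$ be as in the context, and consider the problem (SP): $\min_{(y,x)\in\mathcal{X}}\sum_{i=1}^{n_y}\overline{f}_i(y_i)+\sum_{\omega\in\Omega_1}p_\omega c_\omega^Tx_\omega$. Let $(y^*,x^* )\in\mathcal{X}$ be an optimal solution of (SP). Then (SP) has an optimal solution that is an extreme point of the polyhedron $\mathcal{X}(y^* )=\{(y,x)\in\mathcal{X}: y_i=y^*_i \ \forall i\in\{1,\dots,n_{\mathrm{I}}\}\}$.
   Context: Let $\Omega_1$ be a finite index set, $n_y\geq n_{\mathrm{I}}\geq0$ integers, $A\in\mathbb{R}^{m_1\times n_y}$, $b\in\mathbb{R}^{m_1}$, $D\in\mathbb{R}^{m_2\times n_y}$, and for each $\omega\in\Omega_1$: $p_\omega\in\mathbb{R}$, $c_\omega\in\mathbb{R}^{n_x}$, $B_\omega\in\mathbb{R}^{m_2\times n_x}$, $d_\omega\in\mathbb{R}^{m_2}$. Let $\mathcal{X}=\{(y,\{x_\omega\}_{\omega\in\Omega_1})\geq0: y\in\mathbb{Z}^{n_{\mathrm{I}}}\times\mathbb{R}^{n_y-n_{\mathrm{I}}},\ Ay=b,\ B_\omega x_\omega+Dy=d_\omega\ \forall\omega\in\Omega_1\}$, assumed nonempty and bounded, so that there are vectors $\underline{y}\leq\overline{y}$ with $\underline{y}\leq y\leq\overline{y}$ for all $(y,x)\in\mathcal{X}$. Functions $f_i:\mathbb{R}\to\mathbb{R}$ ($i=1,\dots,n_y$) are concave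 and lower semicontinuous. For each $i$, given breakpoints $y_i^{(1)}<y_i^{(2)}<\dots<y_i^{(k_i)}$ ($k_i\geq2$) with $y_i\in[y_i^{(1)},y_i^{(k_i)}]$ for every $(y,x)\in\mathcal{X}$, define $\overline{f}_i:[y_i^{(1)},y_i^{(k_i)}]\to\mathbb{R}$ by $\overline{f}_i(y_i)=\frac{f_i(y_i^{(j+1)})-f_i(y_i^{(j)})}{y_i^{(j+1)}-y_i^{(j)}}(y_i-y_i^{(j)})+f_i(y_i^{(j)})$ for $y_i\in[y_i^{(j)},y_i^{(j+1)}]$, $j=1,\dots,k_i-1$ (the formulas agree at common breakpoints). *)

(* Defs.v *)
From HB Require Import structures.
From mathcomp Require Import all_boot all_order all_algebra.
From mathcomp Require Import reals.
Import Order.TTheory GRing.Theory Num.Theory.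
Local Open Scope ring_scope.

Section Defs.
Context {R : realType}.

Definition concave_fun (f : R -> R) : Prop :=
  forall a b t : R, 0 <= t -> t <= 1 ->
    t * f a + (1 - t) * f b <= f (t * a + (1 - t) * b).

Definition lsc_fun (f : R -> R) : Prop :=
  forall (a e : R), 0 < e -> exists2 del : R, 0 < del &
    forall z : R, `|z - a| < del -> f a - e < f z.

Definition valid_breakpoints (s : seq R) : Prop :=
  (2 <= size s)%N /\ sorted (fun u v : R => u < v) s.

(* Piecewise-linear interpolation of f at the breakpoints s:
   on [s_j, s_{j+1}] it is the chord of f between s_j and s_{j+1}.
   (The first segment containing y is used; segments agree at common
   breakpoints.  Values outside [head, last] are irrelevant.) *)
Fixpoint pwl (f : R -> R) (s : seq R) (y : R) : R :=
  match s with
  | a :: s' =>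
      match s' with
      | b :: rest =>
          if (y <= b) || nilp rest
          then (f b - f a) / (b - a) * (y - a) + f a
          else pwl f s' y
      | [::] => f a
      end
  | [::] => 0
  end.

End Defs.

Definition inX (R : realType) (ny nI nx m1 m2 : nat) (Om : finType)
  (A : 'M[R]_(m1, ny)) (b : 'cV[R]_m1) (D : 'M[R]_(m2, ny))
  (B : Om -> 'M[R]_(m2, nx)) (d : Om -> 'cV[R]_m2)
  (y : 'cV[R]_ny) (x : Om -> 'cV[R]_nx) : Prop :=
  (forall i : 'I_ny, 0 <= y i 0) /\
  (forall (w : Om) (j : 'I_nx), 0 <= x w j 0) /\
  (forall i : 'I_ny, (i < nI)%N -> y i 0 \is a Num.int) /\
  A *m y = b /\
  (forall w : Om, B w *m x w + D *m y = d w).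

Definition objSP (R : realType) (ny nx : nat) (Om : finType)
  (f : 'I_ny -> R -> R) (bp : 'I_ny -> seq R)
  (p : Om -> R) (c : Om -> 'cV[R]_nx)
  (y : 'cV[R]_ny) (x : Om -> 'cV[R]_nx) : R :=
  \sum_(i < ny) pwl (f i) (bp i) (y i 0)
  + \sum_(w : Om) p w * (\sum_(j < nx) c w j 0 * x w j 0).

Definition extreme_point (R : realType) (ny nx : nat) (Om : finType)
  (S : 'cV[R]_ny -> (Om -> 'cV[R]_nx) -> Prop)
  (y : 'cV[R]_ny) (x : Om -> 'cV[R]_nx) : Prop :=
  S y x /\
  forall (y1 y2 : 'cV[R]_ny) (x1 x2 : Om -> 'cV[R]_nx) (t : R),
    S y1 x1 -> S y2 x2 -> 0 < t -> t < 1 ->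
    y = t *: y1 + (1 - t) *: y2 ->
    (forall w, x w = t *: x1 w + (1 - t) *: x2 w) ->
    y1 = y2 /\ (forall w, x1 w = x2 w).

Arguments inX {R ny} nI {nx m1 m2 Om} A b D B d y x.
Arguments objSP {R ny nx Om} f bp p c y x.
Arguments extreme_point {R ny nx Om} S y x.

(* Main.v *)
Require Import Defs.
From HB Require Import structures.
From mathcomp Require Import all_boot all_order all_algebra.
From mathcomp Require Import reals ring lra.
Import Order.TTheory GRing.Theory Num.Theory.
Local Open Scope ring_scope.

From Stdlib Require Import Classical.
Section PWL.
Context {R : realType} (f : R -> R).
Context (fconc : concave_fun f).

Definition chord (u v y : R) : R := (f v - f u) / (v - u) * (y - u) + f u.

Lemma chord_below u v y : u < v -> u <= y -> y <= v -> chord u v y <= f y.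
Proof.
move=> uv uy yv.
have vu0 : v - u != 0 by rewrite subr_eq0 gt_eqF.
set t := (v - y) / (v - u).
have t0 : 0 <= t by rewrite divr_ge0 // subr_ge0 // ltW.
have t1 : t <= 1 by rewrite ler_pdivrMr ?subr_gt0 // mul1r lerD2l lerN2.
have := fconc u v t t0 t1.
have -> : t * u + (1 - t) * v = y by rewrite /t; field.
have -> : t * f u + (1 - t) * f v = chord u v y by rewrite /t /chord; field.
by [].
Qed.

Lemma chord_above u v y : u < v -> (y <= u) || (v <= y) -> f y <= chord u v y.
Proof.
move=> uv /orP[yu|vy].
- have vyp : 0 < v - y by rewrite subr_gt0 (le_lt_trans yu uv).
  have vup : 0 < v - u by rewrite subr_gt0.
  have vy0 : v - y != 0 by rewrite gt_eqF.
  have vu0 : v - u != 0 by rewrite gt_eqF.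
  set t := (v - u) / (v - y).
  have t0 : 0 <= t by rewrite divr_ge0 ?ltW.
  have t1 : t <= 1 by rewrite ler_pdivrMr // mul1r lerD2l lerN2.
  have := fconc y v t t0 t1.
  have -> : t * y + (1 - t) * v = u by rewrite /t; field.
  move=> H.
  have -> : chord u v y = f y + (f u - (t * f y + (1 - t) * f v)) * (v - y) / (v - u).
    by rewrite /chord /t; field; rewrite ?vu0 ?vy0.
  rewrite lerDl; apply: divr_ge0; last by rewrite ltW.
  by apply: mulr_ge0; [rewrite subr_ge0|rewrite ltW].
- have yup : 0 < y - u by rewrite subr_gt0 (lt_le_trans uv vy).
  have vup : 0 < v - u by rewrite subr_gt0.
  have yu0 : y - u != 0 by rewrite gt_eqF.
  have vu0 : v - u != 0 by rewrite gt_eqF.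
  set t := (y - v) / (y - u).
  have t0 : 0 <= t by apply: divr_ge0; [rewrite subr_ge0 | apply: ltW].
  have t1 : t <= 1 by rewrite ler_pdivrMr // mul1r lerD2l lerN2 ltW.
  have := fconc u y t t0 t1.
  have -> : t * u + (1 - t) * y = v by rewrite /t; field.
  move=> H.
  have -> : chord u v y = f y + (f v - (t * f u + (1 - t) * f y)) * (y - u) / (v - u).
    by rewrite /chord /t; field; rewrite ?vu0 ?yu0.
  rewrite lerDl; apply: divr_ge0; last by rewrite ltW.
  by apply: mulr_ge0; [rewrite subr_ge0|rewrite ltW].
Qed.


Lemma pwl_cons a b rest y : pwl f [:: a, b & rest] y =
  if (y <= b) || nilp rest then chord a b y else pwl f (b :: rest) y.
Proof. by []. Qed.

Lemma zip_pairs (rest : seq R) (b u v : R) :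
  sorted (fun a c : R => a < c) (b :: rest) ->
  (u, v) \in zip (b :: rest) rest -> b <= u /\ u < v.
Proof.
elim: rest b => [|c rest IH] b //= /andP[bc pc].
rewrite in_cons => /orP[/eqP[-> ->]|H]; first by split.
have [cu uv] := IH c pc H; split => //.
exact: le_trans (ltW bc) cu.
Qed.

Lemma pwl_seg (s : seq R) (y : R) : (2 <= size s)%N ->
  sorted (fun a c : R => a < c) s -> head 0 s <= y -> y <= last 0 s ->
  exists u v, [/\ (u, v) \in zip s (behead s), u < v, u <= y, y <= v &
     pwl f s y = chord u v y].
Proof.
elim: s => [|a s' IH] //.
case: s' IH => [|b rest] IH // _ /andP[ab pr] hy ly; simpl in hy, ly; rewrite pwl_cons.
case: ifP => [/orP H|/negbT]; last first.
  rewrite negb_or -ltNge => /andP[bly nr].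
  case: rest IH nr pr ly => [|c rest] IH // _ pr ly.
  have [u [v [uvin uv uy yv e]]] := IH isT pr (ltW bly) ly.
  exists u, v; split => //.
  by rewrite in_cons uvin orbT.
exists a, b; split => //; first by rewrite in_cons eqxx.
by case: H => [//|]; clear IH pr; case: rest ly.
Qed.

Lemma pwl_le (s : seq R) (y : R) : (2 <= size s)%N ->
  sorted (fun a c : R => a < c) s -> head 0 s <= y -> y <= last 0 s ->
  forall u v, (u, v) \in zip s (behead s) -> pwl f s y <= chord u v y.
Proof.
elim: s => [|a s' IH] //.
case: s' IH => [|b rest] IH // _ /andP[ab pr] hy ly u v; simpl in hy, ly; rewrite pwl_cons.
rewrite in_cons => /orP[/eqP[-> ->]|uvin].
  case: ifP => [_|/negbT]; first by [].
  rewrite negb_or -ltNge => /andP[bly nr].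
  case: rest IH nr pr ly => [|c rest] IH // _ pr ly.
  have [u' [v' [_ uv' uy' yv' ->]]] := pwl_seg (b :: c :: rest) y isT pr (ltW bly) ly.
  apply: le_trans (chord_below _ _ _ uv' uy' yv') _.
  by apply: chord_above => //; rewrite (ltW bly) orbT.
have [bu uv] := zip_pairs _ _ _ _ pr uvin.
case: ifP => [/orP H|/negbT].
  have yb : y <= b.
    case: H => [//|]; case: rest ly pr uvin {IH} => //.
  apply: le_trans (chord_below _ _ _ ab hy yb) _.
  by apply: chord_above => //; rewrite (le_trans yb bu).
rewrite negb_or -ltNge => /andP[bly nr].
case: rest IH nr pr ly uvin => [|c rest] IH // _ pr ly uvin.
exact: (IH isT pr (ltW bly) ly u v uvin).
Qed.

Lemma pwl_concave (s : seq R) (a b t : R) : (2 <= size s)%N ->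
  sorted (fun a c : R => a < c) s ->
  head 0 s <= a -> a <= last 0 s -> head 0 s <= b -> b <= last 0 s ->
  0 <= t -> t <= 1 ->
  t * pwl f s a + (1 - t) * pwl f s b <= pwl f s (t * a + (1 - t) * b).
Proof.
move=> ss so ha la hb lb t0 t1.
have t1' : 0 <= 1 - t by rewrite subr_ge0.
have hz : head 0 s <= t * a + (1 - t) * b.
  have := ler_wpM2l t0 ha; have := ler_wpM2l t1' hb; lra.
have lz : t * a + (1 - t) * b <= last 0 s.
  have := ler_wpM2l t0 la; have := ler_wpM2l t1' lb; lra.
have [u [v [uvin uv _ _ ->]]] := pwl_seg _ _ ss so hz lz.
have e : chord u v (t * a + (1 - t) * b) = t * chord u v a + (1 - t) * chord u v b.
  by rewrite /chord; ring.
rewrite e.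
have := ler_wpM2l t0 (pwl_le _ _ ss so ha la _ _ uvin).
have := ler_wpM2l t1' (pwl_le _ _ ss so hb lb _ _ uvin).
lra.
Qed.

End PWL.
Lemma exists_min (R : realType) (I : finType) (P : pred I) (F : I -> R) (i0 : I) :
  P i0 -> exists2 i, P i & forall j, P j -> F i <= F j.
Proof. by move=> Pi0; case: (arg_minP F Pi0) => i Pi H; exists i. Qed.

Section Main.
Context (R : realType) (ny nI nx m1 m2 : nat) (Om : finType)
  (A : 'M[R]_(m1, ny)) (b : 'cV[R]_m1) (D : 'M[R]_(m2, ny))
  (B : Om -> 'M[R]_(m2, nx)) (d : Om -> 'cV[R]_m2)
  (ystar : 'cV[R]_ny).

Definition K := ('I_ny + (Om * 'I_nx))%type.

Definition crd (y : 'cV[R]_ny) (x : Om -> 'cV[R]_nx) (k : K) : R :=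
  match k with inl i => y i 0 | inr wj => x wj.1 wj.2 0 end.

Definition SS y x := inX nI A b D B d y x /\
  forall i : 'I_ny, (i < nI)%N -> y i 0 = ystar i 0.

Lemma crd_ge0 y x k : inX nI A b D B d y x -> 0 <= crd y x k.
Proof. by case=> [hy [hx _]]; case: k => [i|[w j]] /=. Qed.

Lemma line_feas y x y1 x1 y2 x2 (s : R) :
  SS y x -> SS y1 x1 -> SS y2 x2 ->
  (forall k, 0 <= crd y x k + s * (crd y1 x1 k - crd y2 x2 k)) ->
  SS (y + s *: (y1 - y2)) (fun w => x w + s *: (x1 w - x2 w)).
Proof.
move=> [[hy [hx [hI [hA hB]]]] hf] [[_ [_ [_ [hA1 hB1]]]] hf1]
  [[_ [_ [_ [hA2 hB2]]]] hf2] hk.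
have fix_ : forall i : 'I_ny, (i < nI)%N ->
    (y + s *: (y1 - y2)) i 0 = ystar i 0.
  by move=> i hi; rewrite !mxE hf // hf1 // hf2 // subrr mulr0 addr0.
split=> //; split.
  by move=> i; rewrite !mxE; apply: (hk (inl i)).
split.
  by move=> w j; rewrite !mxE; apply: (hk (inr (w, j))).
split.
  by move=> i hi; rewrite fix_ // -hf //; apply: hI.
split.
  by rewrite mulmxDr -scalemxAr mulmxBr hA hA1 hA2 subrr scaler0 addr0.
move=> w.
rewrite !mulmxDr -!scalemxAr !mulmxBr.
have e1 : B w *m x1 w = d w - D *m y1 by rewrite -(hB1 w) addrK.
have e2 : B w *m x2 w = d w - D *m y2 by rewrite -(hB2 w) addrK.
have e0 : B w *m x w = d w - D *m y by rewrite -(hB w) addrK.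
rewrite e0 e1 e2.
set X := D *m y1 - D *m y2.
have -> : d w - D *m y1 - (d w - D *m y2) = - X.
  by rewrite /X [in RHS]opprB opprB [LHS]addrC addrA subrK.
by rewrite scalerN addrACA subrK addNr addr0.
Qed.


Lemma crd_line y x y1 x1 y2 x2 (s : R) k :
  crd (y + s *: (y1 - y2)) (fun w => x w + s *: (x1 w - x2 w)) k =
  crd y x k + s * (crd y1 x1 k - crd y2 x2 k).
Proof. by case: k => [i|[w j]] /=; rewrite !mxE. Qed.

Context (f : 'I_ny -> R -> R) (bp : 'I_ny -> seq R) (p : Om -> R) (c : Om -> 'cV[R]_nx).
Context (fconc : forall i, concave_fun (f i)).
Context (bpv : forall i, valid_breakpoints (bp i)).
Context (bpr : forall i y x, inX nI A b D B d y x ->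
     head 0 (bp i) <= y i 0 /\ y i 0 <= last 0 (bp i)).
Context (M : R) (hM : forall y x, inX nI A b D B d y x ->
     (forall i, `|y i 0| <= M) /\ (forall w j, `|x w j 0| <= M)).

Lemma crd_bound y x k : inX nI A b D B d y x -> `|crd y x k| <= M.
Proof. by move=> /hM [h1 h2]; case: k => [i|[w j]] /=. Qed.

Notation obj := (objSP f bp p c).

Lemma obj_concave y x ya xa yb xb (l : R) :
  inX nI A b D B d ya xa -> inX nI A b D B d yb xb -> 0 <= l -> l <= 1 ->
  (forall k, crd y x k = l * crd ya xa k + (1 - l) * crd yb xb k) ->
  l * obj ya xa + (1 - l) * obj yb xb <= obj y x.
Proof.
move=> Ha Hb l0 l1 hk; rewrite /objSP.
have H1 : l * (\sum_(i < ny) pwl (f i) (bp i) (ya i 0)) +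
          (1 - l) * (\sum_(i < ny) pwl (f i) (bp i) (yb i 0)) <=
          \sum_(i < ny) pwl (f i) (bp i) (y i 0).
  rewrite !mulr_sumr -big_split /=; apply: ler_sum => i _.
  have -> : y i 0 = l * ya i 0 + (1 - l) * yb i 0 by exact: (hk (inl i)).
  have [s2 so] := bpv i.
  have [ha la] := bpr i _ _ Ha; have [hb lb] := bpr i _ _ Hb.
  exact: (pwl_concave (f i) (fconc i)).
have H2 : l * (\sum_(w : Om) p w * (\sum_(j < nx) c w j 0 * xa w j 0)) +
          (1 - l) * (\sum_(w : Om) p w * (\sum_(j < nx) c w j 0 * xb w j 0)) =
          \sum_(w : Om) p w * (\sum_(j < nx) c w j 0 * x w j 0).
  rewrite !mulr_sumr -big_split /=; apply: eq_bigr => w _.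
  have -> : \sum_(j < nx) c w j 0 * x w j 0 =
     l * (\sum_(j < nx) c w j 0 * xa w j 0) + (1 - l) * (\sum_(j < nx) c w j 0 * xb w j 0).
    rewrite !mulr_sumr -big_split /=; apply: eq_bigr => j _.
    have -> : x w j 0 = l * xa w j 0 + (1 - l) * xb w j 0 by exact: (hk (inr (w, j))).
    ring.
  ring.
rewrite !mulrDr; lra.
Qed.

Definition opt y x := forall y' x', inX nI A b D B d y' x' -> obj y x <= obj y' x'.
Definition supp y x := #|[set k : K | crd y x k != 0]|.

Lemma step y x : SS y x -> opt y x ->
  extreme_point SS y x \/
  exists y' x', [/\ SS y' x', opt y' x' & (supp y' x' < supp y x)%N].
Proof.
move=> Sz oz.
case: (classic (exists y' x', [/\ SS y' x', opt y' x' & (supp y' x' < supp y x)%N]))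
  => [E|nE]; [by right|left].
split=> // y1 y2 x1 x2 t S1 S2 t0 t1 ey ex.
apply: NNPP => neq; apply: nE.
pose u k := crd y1 x1 k - crd y2 x2 k.
have F1 : forall k, crd y x k = t * crd y1 x1 k + (1 - t) * crd y2 x2 k.
  by case=> [i|[w j]] /=; [rewrite ey | rewrite ex]; rewrite !mxE.
have F2 : exists k, u k != 0.
  apply: NNPP => H; apply: neq.
  have H' : forall k, crd y1 x1 k = crd y2 x2 k.
    move=> k; apply/eqP; rewrite -subr_eq0; apply/negPn/negP => hk.
    by apply: H; exists k.
  split; first by apply/matrixP => i j; rewrite (ord1 j); exact: (H' (inl i)).
  by move=> w; apply/matrixP => i j; rewrite (ord1 j); exact: (H' (inr (w, i))).
have t1' : 0 < 1 - t by rewrite subr_gt0.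
have F3 : forall k, crd y x k = 0 -> u k = 0.
  move=> k hk.
  have a0 := crd_ge0 _ _ k S1.1; have b0 := crd_ge0 _ _ k S2.1.
  have ta := mulr_ge0 (ltW t0) a0; have tb := mulr_ge0 (ltW t1') b0.
  have := F1 k; rewrite hk => e.
  have ha : t * crd y1 x1 k = 0 by lra.
  have hb : (1 - t) * crd y2 x2 k = 0 by lra.
  move/eqP: ha; move/eqP: hb; rewrite !mulf_eq0 (gt_eqF t0) (gt_eqF t1') /=.
  by move=> /eqP hb /eqP ha; rewrite /u ha hb subrr.
have F4 : exists k, u k < 0.
  apply: NNPP => H.
  have hu : forall k, 0 <= u k.
    by move=> k; rewrite leNgt; apply/negP => hk; apply: H; exists k.
  case: F2 => k1 hk1.
  have uk1 : 0 < u k1 by rewrite lt_def hk1 hu.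
  have M0 : 0 <= M := le_trans (normr_ge0 _) (crd_bound _ _ k1 Sz.1).
  pose s := (M + 1) / u k1.
  have s0 : 0 <= s by apply: divr_ge0; [apply: addr_ge0 | apply: ltW].
  have Sn := line_feas _ _ _ _ _ _ s Sz S1 S2
    (fun k => addr_ge0 (crd_ge0 _ _ k Sz.1) (mulr_ge0 s0 (hu k))).
  have := crd_bound _ _ k1 Sn.1; rewrite crd_line.
  have -> : s * (crd y1 x1 k1 - crd y2 x2 k1) = M + 1.
    by rewrite /s -/(u k1); field; rewrite gt_eqF.
  have := crd_ge0 _ _ k1 Sz.1.
  move=> h1 h2; have := ler_norm (crd y x k1 + (M + 1)); lra.
case: F4 => k' hk'.
have [k0 hk0 hmin] := @exists_min R K [pred k | u k < 0]
  (fun k => crd y x k / - u k) k' hk'.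
rewrite /= in hk0 hmin.
pose s1 := crd y x k0 / - u k0.
have zk0 : 0 < crd y x k0.
  rewrite lt_def (crd_ge0 _ _ _ Sz.1) andbT; apply/eqP => hz.
  by move: hk0; rewrite (F3 _ hz) ltxx.
have nu0 : 0 < - u k0 by rewrite oppr_gt0.
have s1p : 0 < s1 by rewrite divr_gt0.
have nn : forall k, 0 <= crd y x k + s1 * u k.
  move=> k; case: (ltP (u k) 0) => hk.
  - have := hmin k hk; rewrite ler_pdivlMr ?oppr_gt0 // mulrN; rewrite -/s1 => h; lra.
  - exact: addr_ge0 (crd_ge0 _ _ k Sz.1) (mulr_ge0 (ltW s1p) hk).
have Sn := line_feas _ _ _ _ _ _ s1 Sz S1 S2 nn.
exists (y + s1 *: (y1 - y2)), (fun w => x w + s1 *: (x1 w - x2 w)); split => //.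
- move=> y'' x'' h''; apply: le_trans (oz _ _ h'').
  pose l := t / (t + s1).
  have ts0 : 0 < t + s1 by rewrite addr_gt0.
  have l0 : 0 < l by rewrite divr_gt0.
  have l1 : l < 1 by rewrite ltr_pdivrMr // mul1r ltrDl.
  have hl : forall k, crd y x k = l * crd (y + s1 *: (y1 - y2))
       (fun w => x w + s1 *: (x1 w - x2 w)) k + (1 - l) * crd y2 x2 k.
    by move=> k; rewrite crd_line F1 /l; field; rewrite gt_eqF.
  have h := obj_concave y x _ _ y2 x2 l Sn.1 S2.1 (ltW l0) (ltW l1) hl.
  have h2 := oz _ _ S2.1.
  move: h h2.
  set o1 := obj (y + s1 *: (y1 - y2)) _; set o2 := obj y2 x2; set o := obj y x.
  move=> h h2.
  have h3 : l * (o1 - o) <= 0.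
    have : 0 <= (1 - l) * (o2 - o) by apply: mulr_ge0; rewrite subr_ge0 ?(ltW l1).
    move: h; rewrite !mulrBr; lra.
  by move: h3; rewrite pmulr_rle0 // subr_le0.
- rewrite /supp; apply: proper_card; apply/properP; split.
    apply/subsetP => k; rewrite !inE crd_line.
    apply: contraNneq => hz; apply/eqP.
    by move: (F3 _ hz); rewrite /u hz => ->; rewrite mulr0 addr0.
  exists k0; rewrite !inE; first by rewrite gt_eqF.
  rewrite negbK crd_line /s1 -/(u k0); apply/eqP; field.
  by rewrite -oppr_eq0 gt_eqF.
Qed.

Lemma main_ind n : forall y x, SS y x -> opt y x -> (supp y x <= n)%N ->
  exists y' x', [/\ extreme_point SS y' x', SS y' x' & opt y' x'].
Proof.
elim: n => [|n IH] y x Sz oz hs;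
  (case: (step _ _ Sz oz) => [ext|[y' [x' [S' o' lt]]]]; first by exists y, x).
  by move: (leq_trans lt hs).
by apply: (IH y' x') => //; rewrite -ltnS (leq_trans lt hs).
Qed.

End Main.

Theorem lemma1 (R : realType) (ny nI nx m1 m2 : nat) (Om : finType)
  (A : 'M[R]_(m1, ny)) (b : 'cV[R]_m1) (D : 'M[R]_(m2, ny))
  (p : Om -> R) (c : Om -> 'cV[R]_nx)
  (B : Om -> 'M[R]_(m2, nx)) (d : Om -> 'cV[R]_m2)
  (f : 'I_ny -> R -> R) (bp : 'I_ny -> seq R)
  (ystar : 'cV[R]_ny) (xstar : Om -> 'cV[R]_nx) :
  (nI <= ny)%N ->
  (* X nonempty and bounded *)
  (exists y x, inX nI A b D B d y x) ->
  (exists M : R, forall y x, inX nI A b D B d y x ->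
     (forall i, `|y i 0| <= M) /\ (forall w j, `|x w j 0| <= M)) ->
  (* f_i concave and lower semicontinuous *)
  (forall i, concave_fun (f i)) ->
  (forall i, lsc_fun (f i)) ->
  (* breakpoints, covering all feasible y_i *)
  (forall i, valid_breakpoints (bp i)) ->
  (forall i y x, inX nI A b D B d y x ->
     head 0 (bp i) <= y i 0 /\ y i 0 <= last 0 (bp i)) ->
  (* (ystar, xstar) is optimal for (SP) *)
  inX nI A b D B d ystar xstar ->
  (forall y x, inX nI A b D B d y x ->
     objSP f bp p c ystar xstar <= objSP f bp p c y x) ->
  exists (y : 'cV[R]_ny) (x : Om -> 'cV[R]_nx),
    extreme_point
      (fun y' x' => inX nI A b D B d y' x' /\
                    forall i : 'I_ny, (i < nI)%N -> y' i 0 = ystar i 0)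
      y x /\
    inX nI A b D B d y x /\
    (forall y' x', inX nI A b D B d y' x' ->
       objSP f bp p c y x <= objSP f bp p c y' x').
Proof.
move=> _ _ [M hM] fconc _ bpv bpr hstar hopt.
have Sz : SS R ny nI nx m1 m2 Om A b D B d ystar ystar xstar by split.
have [y' [x' [ext [S' _] o']]] :=
  @main_ind R ny nI nx m1 m2 Om A b D B d ystar f bp p c fconc bpv bpr M hM
    _ _ _ Sz hopt (leqnn _).
by exists y', x'; split.
Qed.
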